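(* Let $R>0$. For a Ptolemy interval $([0,1],d)$ with $d(0,1)=R$ consider the curve $t\mapsto p_t=(d(t,1),d(t,0))\in Q$, $t\in[0,1]$. This assignment induces a one-to-one correspondence between isometry classes of Ptolemy intervals $([0,1],d)$ with $d(0,1)=R$ and convex curves in $T(e_R^1,e_R^2)$ from $e_R^1$ to $e_R^2$ (considered as subsets of $Q$), modulo reflection at the bisecting line $\{(a,a):a\ge0\}$ of $Q$.
   Context: A Ptolemy interval (Ptolemy segment) is a compact interval with a metric $d$ inducing its standard topology such that $d(x_1,x_3)d(x_2,x_4)=d(x_1,x_2)d(x_3,x_4)+d(x_1,x_4)d(x_3,x_2)$ whenever $x_1,x_2,x_3,x_4$ lie in this order on the interval. Let $Q=[0,\infty)\times[0,\infty)\subset\mathbb{R}^2$, $e_R^1=(R,0)$, $e_R^2=(0,R)$, and let $\arg(p)$ denote the polar angle of $p\in Q\setminus\{0\}$. For $u,w\in Q$ with $\arg(u)<\arg(w)$, $T(u,w)=\{\lambda u+\mu w\in Q:\ \lambda,\mu\ge0,\ \lambda+\mu\ge1,\ \lambda+1\ge\mu,\ \mu+1\ge\lambda\}$. A curve $t\mapsto p_t$ in $Q$, $t\in[0,1]$, from $e_R^1$ to $e_R^2$ is convex if it is continuous, $\arg(p_t)$ is strictly increasing in $t$, and the bounded component of $Q\setminus\{p_t:t\in[0,1]\}$ is convex. *)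

(* Defs.v *)
From HB Require Import structures.
From mathcomp Require Import all_boot all_order all_algebra.
From mathcomp Require Import all_classical all_reals all_analysis.
Set Implicit Arguments. Unset Strict Implicit. Unset Printing Implicit Defensive.
Import Order.TTheory GRing.Theory Num.Theory.
Import numFieldNormedType.Exports.
Local Open Scope classical_set_scope.
Local Open Scope ring_scope.

Section Defs.
Variable R : realType.

Definition I01 : set R := `[0, 1]%classic.

(** [d] is a metric on [0,1] (only its values on [0,1]x[0,1] matter). *)
Definition metric_on01 (d : R -> R -> R) : Prop :=
  [/\ (forall x, I01 x -> d x x = 0),
      (forall x y, I01 x -> I01 y -> d x y = 0 -> x = y),
      (forall x y, I01 x -> I01 y -> d x y = d y x) &
      (forall x y z, I01 x -> I01 y -> I01 z -> d x z <= d x y + d y z)].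

Definition d_open (d : R -> R -> R) (U : set R) : Prop :=
  forall x, U x -> exists2 e : R, 0 < e &
    forall y, I01 y -> d x y < e -> U y.

Definition std_open (U : set R) : Prop :=
  forall x, U x -> exists2 e : R, 0 < e &
    forall y, I01 y -> `|x - y| < e -> U y.

Definition induces_standard_topology (d : R -> R -> R) : Prop :=
  forall U : set R, U `<=` I01 -> (d_open d U <-> std_open U).

Definition ptolemy_eq (d : R -> R -> R) : Prop :=
  forall x1 x2 x3 x4, I01 x1 -> I01 x4 -> x1 <= x2 -> x2 <= x3 -> x3 <= x4 ->
    d x1 x3 * d x2 x4 = d x1 x2 * d x3 x4 + d x1 x4 * d x3 x2.

Definition ptolemy_interval (d : R -> R -> R) : Prop :=
  [/\ metric_on01 d, induces_standard_topology d & ptolemy_eq d].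

Definition isometric01 (d d' : R -> R -> R) : Prop :=
  exists f : R -> R,
    [/\ (forall x, I01 x -> I01 (f x)),
        (forall y, I01 y -> exists2 x, I01 x & f x = y) &
        (forall x y, I01 x -> I01 y -> d' (f x) (f y) = d x y)].

Definition Quad : set (R * R) := [set p | 0 <= p.1 /\ 0 <= p.2].

Definition e1 (r : R) : R * R := (r, 0).
Definition e2 (r : R) : R * R := (0, r).

Definition arg (p : R * R) : R := acos (p.1 / Num.sqrt (p.1 ^+ 2 + p.2 ^+ 2)).

Definition Tset (u w : R * R) : set (R * R) :=
  [set p | Quad p /\ exists l m : R,
     [/\ 0 <= l, 0 <= m, 1 <= l + m, m <= l + 1 & l <= m + 1] /\
     p = (l * u.1 + m * w.1, l * u.2 + m * w.2)].

Definition swap_pt (p : R * R) : R * R := (p.2, p.1).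
Definition reflect_set (A : set (R * R)) : set (R * R) := swap_pt @` A.

Definition bounded_set2 (A : set (R * R)) : Prop :=
  exists M : R, forall p, A p -> `|p.1| <= M /\ `|p.2| <= M.

Definition convex_set2 (A : set (R * R)) : Prop :=
  forall p q, A p -> A q -> forall l : R, 0 <= l -> l <= 1 ->
    A ((1 - l) * p.1 + l * q.1, (1 - l) * p.2 + l * q.2).

Definition convex_curve (p : R -> R * R) (a b : R * R) : Prop :=
  let img := p @` I01 in
  [/\ {within I01, continuous p},
      (forall t, I01 t -> Quad (p t) /\ p t <> (0, 0)),
      (forall s t, I01 s -> I01 t -> s < t -> arg (p s) < arg (p t)),
      p 0 = a /\ p 1 = b &
      (forall x, (Quad `\` img) x ->
         bounded_set2 (connected_component (Quad `\` img) x) ->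
         convex_set2 (connected_component (Quad `\` img) x))].

Definition convex_curve_set (r : R) (A : set (R * R)) : Prop :=
  exists p : R -> R * R,
    [/\ convex_curve p (e1 r) (e2 r), p @` I01 = A & A `<=` Tset (e1 r) (e2 r)].

Definition curve_of (d : R -> R -> R) : set (R * R) :=
  (fun t => (d t 1, d t 0)) @` I01.

End Defs.

(* Main.v *)
Require Import Defs.
From HB Require Import structures.
From mathcomp Require Import all_boot all_order all_algebra.
From mathcomp Require Import all_classical all_reals all_analysis.
From mathcomp Require Import ring lra.
Import Order.TTheory GRing.Theory Num.Theory.
Import numFieldNormedType.Exports.
Local Open Scope classical_set_scope.
Local Open Scope ring_scope.
Set Implicit Arguments. Unset Strict Implicit. Unset Printing Implicit Defensive.

Lemma I01P (R : realType) (t : R) : I01 t <-> 0 <= t <= 1.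
Proof. by rewrite /I01 /= in_itv /=. Qed.

Lemma I01_0 (R : realType) : I01 (0 : R).
Proof. by apply/I01P; rewrite lexx ler01. Qed.

Lemma I01_1 (R : realType) : I01 (1 : R).
Proof. by apply/I01P; rewrite lexx ler01. Qed.

Definition ctsS (R : realType) (f : R -> R) :=
  forall t, I01 t -> forall e, 0 < e -> exists2 d, 0 < d &
    forall s, I01 s -> `|t - s| < d -> `|f t - f s| < e.

Definition ctsI (R : realType) (p : R -> R * R) :=
  forall t, I01 t -> forall e, 0 < e -> exists2 d, 0 < d &
    forall s, I01 s -> `|t - s| < d -> `|(p t).1 - (p s).1| < e /\ `|(p t).2 - (p s).2| < e.

Lemma ctsIP (R : realType) (p : R -> R * R) :
  {within I01 (R:=R), continuous p} <-> ctsI p.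
Proof.
rewrite subspace_continuousP; split.
- move=> H t It e e0.
  have := cvg_ball (H t It) e0.
  rewrite /prop_near1 /within /= nbhs_simpl /=.
  move=> /(_ (within_filter _ _)) /nbhs_ballP [d d0 Hd]; exists d => // s Is ts.
  have := Hd s; rewrite /ball /= => /(_ ts Is).
  by rewrite /prod_ball /ball /=.
- move=> H t It; apply/cvg_ballP => e e0.
  have [d d0 Hd] := H t It e e0.
  rewrite /prop_near1 /within /= nbhs_simpl /=.
  apply/nbhs_ballP; exists d => // s ts Is.
  by have := Hd s Is ts.
Qed.

Lemma ctsI_split (R : realType) (p : R -> R * R) :
  ctsI p <-> ctsS (fun t => (p t).1) /\ ctsS (fun t => (p t).2).
Proof.
split.
- move=> H; split => t It e e0; have [d d0 Hd] := H t It e e0;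
  by exists d => // s Is ts; case: (Hd s Is ts).
- move=> [H1 H2] t It e e0.
  have [d1 d10 Hd1] := H1 t It e e0; have [d2 d20 Hd2] := H2 t It e e0.
  exists (Num.min d1 d2); first by rewrite lt_min d10 d20.
  move=> s Is; rewrite lt_min => /andP[s1 s2]; split; [exact: Hd1|exact: Hd2].
Qed.

Lemma ctsS_within (R : realType) (f : R -> R) (a b : R) :
  ctsS f -> 0 <= a -> b <= 1 -> {within `[a, b], continuous f}.
Proof.
move=> H a0 b1; apply/subspace_continuousP => t tab; apply/cvg_ballP => e e0.
have It : I01 t.
  by move: tab => /=; rewrite in_itv /= => /andP[h1 h2]; apply/I01P;
    rewrite (le_trans a0 h1) (le_trans h2 b1).
have [d d0 Hd] := H t It e e0.
rewrite /prop_near1 /within /= nbhs_simpl /=.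
apply/nbhs_ballP; exists d => // s ts Is.
apply: Hd => //.
by move: Is => /=; rewrite in_itv /= => /andP[h1 h2]; apply/I01P;
    rewrite (le_trans a0 h1) (le_trans h2 b1).
Qed.

Lemma ctsS_ctsI_within (R : realType) (f : R -> R) :
  ctsS f -> {within I01 (R:=R), continuous f}.
Proof.
move=> H; apply/subspace_continuousP => t It; apply/cvg_ballP => e e0.
have [d d0 Hd] := H t It e e0.
rewrite /prop_near1 /within /= nbhs_simpl /=.
by apply/nbhs_ballP; exists d => // s ts Is; apply: Hd.
Qed.


Lemma ctsS_add (R : realType) (f g : R -> R) :
  ctsS f -> ctsS g -> ctsS (fun t => f t + g t).
Proof.
move=> Hf Hg t It e e0.
have e20 : 0 < e / 2 by rewrite divr_gt0.
have [d1 d10 H1] := Hf t It _ e20; have [d2 d20 H2] := Hg t It _ e20.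
exists (Num.min d1 d2); first by rewrite lt_min d10 d20.
move=> s Is; rewrite lt_min => /andP[s1 s2].
have h1 := H1 s Is s1; have h2 := H2 s Is s2.
rewrite (_ : f t + g t - (f s + g s) = (f t - f s) + (g t - g s)); last by ring.
rewrite (le_lt_trans (ler_normD _ _)) //.
by rewrite (splitr e) ltrD.
Qed.

Lemma ctsS_mulc (R : realType) (f : R -> R) (c : R) :
  ctsS f -> ctsS (fun t => f t * c).
Proof.
move=> Hf t It e e0.
have c0 : 0 < `|c| + 1 by rewrite ltr_wpDl.
have [d d0 H] := Hf t It (e / (`|c| + 1)) (divr_gt0 e0 c0).
exists d => // s Is ts; have h := H s Is ts.
rewrite -mulrBl normrM.
have h2 : `|f t - f s| * `|c| <= `|f t - f s| * (`|c| + 1).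
  by rewrite ler_wpM2l // lerDl.
apply: (le_lt_trans h2).
by rewrite -ltr_pdivlMr.
Qed.

Lemma ctsS_cst (R : realType) (c : R) : ctsS (fun _ : R => c).
Proof. by move=> t It e e0; exists 1 => // s _ _; rewrite subrr normr0. Qed.

Lemma ctsS_ext (R : realType) (f g : R -> R) :
  (forall t, f t = g t) -> ctsS f -> ctsS g.
Proof.
move=> fg H t It e e0; have [d d0 Hd] := H t It e e0.
by exists d => // s Is ts; rewrite -!fg; apply: Hd.
Qed.

Definition cr (R : realType) (u w : R * R) : R := u.1 * w.2 - u.2 * w.1.
Definition sc (R : realType) (l : R) (u : R * R) : R * R := (l * u.1, l * u.2).

Lemma ctsS_cr (R : realType) (p : R -> R * R) (z : R * R) :
  ctsI p -> ctsS (fun t => cr (p t) z).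
Proof.
move=> /ctsI_split [H1 H2]; rewrite /cr.
apply: ctsS_ext (ctsS_add (ctsS_mulc z.2 H1) (ctsS_mulc (- z.1) H2)) => t.
by rewrite mulrN.
Qed.

Lemma ctsS_S (R : realType) (p : R -> R * R) :
  ctsI p -> ctsS (fun t => (p t).1 + (p t).2).
Proof. by move=> /ctsI_split [H1 H2]; apply: ctsS_add. Qed.

Lemma ctsS_crl (R : realType) (p : R -> R * R) (z : R * R) :
  ctsI p -> ctsS (fun t => cr z (p t)).
Proof.
move=> /ctsI_split [H1 H2]; rewrite /cr.
apply: ctsS_ext (ctsS_add (ctsS_mulc z.1 H2) (ctsS_mulc (- z.2) H1)) => t.
by rewrite (mulrC z.1) mulrN (mulrC z.2).
Qed.


Definition GC (R : realType) (r : R) (p : R -> R * R) :=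
 [/\ 0 < r, ctsI p,
   (forall t, I01 t -> [/\ 0 <= (p t).1, 0 <= (p t).2 & 0 < (p t).1 + (p t).2]),
   (forall s t, I01 s -> I01 t -> s < t -> 0 < cr (p s) (p t)) &
   (p 0 = (r, 0) /\ p 1 = (0, r))].

Lemma crC (R : realType) (u w : R * R) : cr u w = - cr w u.
Proof. rewrite /cr; ring. Qed.

Lemma GC_cr_eq0 (R : realType) (r : R) p s t : GC r p -> I01 s -> I01 t ->
  cr (p s) (p t) = 0 -> s = t.
Proof.
move=> [_ _ _ Hcr _] Is It e.
case: (ltgtP s t) => // st.
- by have := Hcr _ _ Is It st; rewrite e ltxx.
- by have := Hcr _ _ It Is st; rewrite crC e oppr0 ltxx.
Qed.

Lemma par_sc (R : realType) (u z : R * R) :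
  0 <= u.1 -> 0 <= u.2 -> 0 < u.1 + u.2 -> cr u z = 0 ->
  z = sc ((z.1 + z.2) / (u.1 + u.2)) u.
Proof.
move=> h1 h2 h3; rewrite /cr /sc => e.
have hn : u.1 + u.2 != 0 by rewrite gt_eqF.
case: z e => z1 z2 /= e; congr pair.
- rewrite mulrAC -[LHS](mulfK hn); congr (_ / _); nra.
- rewrite mulrAC -[LHS](mulfK hn); congr (_ / _); nra.
Qed.

Lemma GC_pos (R : realType) (r : R) p t : GC r p -> I01 t ->
  [/\ 0 <= (p t).1, 0 <= (p t).2 & 0 < (p t).1 + (p t).2].
Proof. by move=> [_ _ H _ _]; apply: H. Qed.

Lemma GC_ivt (R : realType) (r : R) p s u z : GC r p -> I01 s -> I01 u -> s <= u ->
  Quad z -> 0 <= cr (p s) z -> cr (p u) z <= 0 ->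
  exists t, [/\ I01 t, s <= t, t <= u &
    z = sc ((z.1 + z.2) / ((p t).1 + (p t).2)) (p t)].
Proof.
move=> g Is Iu su Qz h1 h2.
have [_ cp _ _ _] := g.
have cf := ctsS_cr z cp.
have hv : Num.min (cr (p s) z) (cr (p u) z) <= 0 <= Num.max (cr (p s) z) (cr (p u) z).
  by rewrite ge_min le_max h2 h1 orbT.
have [c] := IVT su (ctsS_within cf (proj1 (andP (proj1 (I01P s) Is))) (proj2 (andP (proj1 (I01P u) Iu)))) hv.
rewrite in_itv /= => /andP[sc cu] e.
have Ic : I01 c.
  apply/I01P; have /I01P/andP[s0 _] := Is; have /I01P/andP[_ u1] := Iu.
  by rewrite (le_trans s0 sc) (le_trans cu u1).
have [q1 q2 q3] := GC_pos g Ic.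
by exists c; split => //; apply: par_sc.
Qed.

Lemma GC_ray (R : realType) (r : R) p z : GC r p -> Quad z ->
  exists t, I01 t /\ z = sc ((z.1 + z.2) / ((p t).1 + (p t).2)) (p t).
Proof.
move=> g Qz; have [r0 _ _ _ [p0 p1]] := g.
have h0 : 0 <= cr (p 0) z by rewrite p0 /cr /=; case: Qz => _ h; nra.
have h1 : cr (p 1) z <= 0 by rewrite p1 /cr /=; case: Qz => h _; nra.
have [t [It _ _ e]] := GC_ivt g (I01_0 R) (I01_1 R) ler01 Qz h0 h1.
by exists t.
Qed.

Lemma GC_sc_inj (R : realType) (r : R) p t t' l l' : GC r p -> I01 t -> I01 t' ->
  0 < l -> sc l (p t) = sc l' (p t') -> t = t' /\ l = l'.
Proof.
move=> g It It' l0 e.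
have [a1 a2 a3] := GC_pos g It; have [b1 b2 b3] := GC_pos g It'.
move: e; rewrite /sc; case=> e1 e2.
have l'0 : l' != 0.
  apply/eqP => l'e; move: e1 e2; rewrite l'e !mul0r => e1 e2.
  have : l * ((p t).1 + (p t).2) = 0 by rewrite mulrDr e1 e2 addr0.
  by apply/eqP; rewrite mulf_neq0 // ?gt_eqF.
have tt : t' = t.
  apply: (GC_cr_eq0 g It' It).
  apply: (mulfI l'0); rewrite mulr0 /cr.
  by rewrite mulrBr !mulrA -e1 -e2; ring.
split => //; subst t'.
apply/eqP; rewrite -subr_eq0; apply/eqP.
have : (l - l') * ((p t).1 + (p t).2) = 0 by rewrite mulrBl !mulrDr e1 e2 subrr.
by move/eqP; rewrite mulf_eq0 (gt_eqF a3) orbF => /eqP.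
Qed.


Definition Uin (R : realType) (p : R -> R * R) : set (R * R) :=
  [set z | exists t l, [/\ I01 t, 0 <= l, l < 1 & z = sc l (p t)]].
Definition Vout (R : realType) (p : R -> R * R) : set (R * R) :=
  [set z | exists t l, [/\ I01 t, 1 < l & z = sc l (p t)]].

Lemma sc1 (R : realType) (u : R * R) : sc 1 u = u.
Proof. by case: u => a b; rewrite /sc !mul1r. Qed.

Lemma GC_dec (R : realType) (r : R) p : GC r p ->
  Quad (R:=R) `\` (p @` I01 (R:=R)) `<=` Uin p `|` Vout p.
Proof.
move=> g z [Qz nimg].
have [t [It e]] := GC_ray g Qz.
have [a1 a2 a3] := GC_pos g It.
set k := (z.1 + z.2) / ((p t).1 + (p t).2) in e.
have k0 : 0 <= k by case: Qz => q1 q2; rewrite /k divr_ge0 // ?addr_ge0 // ltW.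
case: (ltgtP k 1) => hk.
- by left; exists t, k.
- by right; exists t, k.
- by exfalso; apply: nimg; exists t => //; rewrite e hk sc1.
Qed.

Lemma GC_Uin_sub (R : realType) (r : R) p : GC r p ->
  Uin p `<=` Quad (R:=R) `\` (p @` I01 (R:=R)).
Proof.
move=> g z [t [l [It l0 l1 ->]]].
have [a1 a2 a3] := GC_pos g It.
split; first by rewrite /Quad /sc /=; split; apply: mulr_ge0.
move=> [t' It' e].
case: (ltgtP 0 l) => hl.
- have e' : sc l (p t) = sc 1 (p t') by rewrite sc1.
  have [_ h] := GC_sc_inj g It It' hl e'.
  by move: l1; rewrite h ltxx.
- by move: l0; rewrite leNgt hl.
- have [b1 b2 b3] := GC_pos g It'.
  move: e; rewrite /sc -hl !mul0r => e.
  by move: b3; rewrite e /= addr0 ltxx.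
Qed.

Lemma GC_Vout_sub (R : realType) (r : R) p : GC r p ->
  Vout p `<=` Quad (R:=R) `\` (p @` I01 (R:=R)).
Proof.
move=> g z [t [l [It l1 ->]]].
have [a1 a2 a3] := GC_pos g It.
have l0 : 0 < l by apply: lt_trans l1.
split; first by rewrite /Quad /sc /=; split; apply: mulr_ge0 => //; apply: ltW.
move=> [t' It' e].
have e' : sc l (p t) = sc 1 (p t') by rewrite sc1.
have [_ h] := GC_sc_inj g It It' l0 e'.
by move: l1; rewrite h ltxx.
Qed.

Lemma GC_UV_disj (R : realType) (r : R) p z : GC r p -> Uin p z -> Vout p z -> False.
Proof.
move=> g [t [l [It l0 l1 ->]]] [t' [l' [It' l'1 e]]].
have l'0 : 0 < l' by apply: lt_trans l'1.
have [_ h] := GC_sc_inj g It' It l'0 (esym e).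
by move: (lt_trans l1 l'1); rewrite h ltxx.
Qed.

Lemma GC_Uin0 (R : realType) (r : R) p : GC r p -> Uin p (0, 0).
Proof.
move=> g; exists 0, 0; split => //; first exact: I01_0.
by rewrite /sc !mul0r.
Qed.


Definition sg (R : realType) (u : R * R) : R := u.2 / (u.1 + u.2).

Lemma sg_diff (R : realType) (u w : R * R) : 0 < u.1 + u.2 -> 0 < w.1 + w.2 ->
  sg w - sg u = cr u w / ((u.1 + u.2) * (w.1 + w.2)).
Proof.
move=> hu hw; rewrite /sg /cr.
have hu' : u.1 + u.2 != 0 by rewrite gt_eqF.
have hw' : w.1 + w.2 != 0 by rewrite gt_eqF.
by field; rewrite hu' hw'.
Qed.

Lemma sg_sc (R : realType) (k : R) (u : R * R) : 0 < k -> 0 < u.1 + u.2 ->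
  sg (sc k u) = sg u.
Proof.
move=> hk hu; rewrite /sg /sc /=.
have hu' : u.1 + u.2 != 0 by rewrite gt_eqF.
have hk' : k != 0 by rewrite gt_eqF.
field; rewrite ?hu' ?hk' //=; rewrite -mulrDr mulf_neq0 //.
Qed.

Lemma GC_sg_lt (R : realType) (r : R) p s t : GC r p -> I01 s -> I01 t -> s < t ->
  sg (p s) < sg (p t).
Proof.
move=> g Is It st; have [_ _ _ hc _] := g.
have [_ _ hs] := GC_pos g Is; have [_ _ ht] := GC_pos g It.
rewrite -subr_gt0 sg_diff //; apply: divr_gt0; [exact: hc|exact: mulr_gt0].
Qed.

Lemma GC_sg_le (R : realType) (r : R) p s t : GC r p -> I01 s -> I01 t -> s <= t ->
  sg (p s) <= sg (p t).
Proof.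
move=> g Is It; rewrite le_eqVlt => /orP[/eqP -> //|st].
exact/ltW/(GC_sg_lt g).
Qed.

Lemma GC_inv (R : realType) (r : R) p x e : GC r p -> I01 x -> 0 < e ->
  exists2 rho, 0 < rho & forall y, I01 y -> `|sg (p y) - sg (p x)| < rho -> `|y - x| < e.
Proof.
move=> g Ix e0.
have /I01P/andP[x0 x1] := Ix.
have e20 : 0 < e / 2 by rewrite divr_gt0.
have [r1 r10 H1] : exists2 r1, 0 < r1 & forall y, I01 y -> x + e <= y -> r1 <= sg (p y) - sg (p x).
  case: (lerP (x + e / 2) 1) => hx.
  - have Iy1 : I01 (x + e / 2) by apply/I01P; rewrite hx andbT addr_ge0 // ltW.
    exists (sg (p (x + e / 2)) - sg (p x)).
      by rewrite subr_gt0; apply: (GC_sg_lt g) => //; rewrite ltrDl.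
    move=> y Iy hy; rewrite lerD2r; apply: (GC_sg_le g) => //.
    by apply: le_trans hy; rewrite lerD2l ler_pdivrMr // ler_pMr // ler1n.
  - exists 1 => // y /I01P/andP[_ y1] hy; exfalso.
    have : x + e / 2 < x + e by rewrite ltrD2l ltr_pdivrMr // ltr_pMr // ltr1n.
    lra.
have [r0 r00 H0] : exists2 r0, 0 < r0 & forall y, I01 y -> y <= x - e -> r0 <= sg (p x) - sg (p y).
  case: (lerP 0 (x - e / 2)) => hx.
  - have Iy0 : I01 (x - e / 2).
      apply/I01P; rewrite hx /= (le_trans _ x1) //; rewrite lerBlDr lerDl ltW //.
    exists (sg (p x) - sg (p (x - e / 2))).
      by rewrite subr_gt0; apply: (GC_sg_lt g) => //; rewrite ltrBlDr ltrDl.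
    move=> y Iy hy; rewrite lerD2l lerN2; apply: (GC_sg_le g) => //.
    apply: le_trans hy _; rewrite lerD2l lerN2.
    by rewrite ler_pdivrMr // ler_pMr // ler1n.
  - exists 1 => // y /I01P/andP[y0 _] hy; exfalso.
    have : x - e < x - e / 2 by rewrite ltrD2l ltrN2 ltr_pdivrMr // ltr_pMr // ltr1n.
    lra.
exists (Num.min r1 r0); first by rewrite lt_min r10 r00.
move=> y Iy; rewrite lt_min => /andP[h1 h0].
rewrite ltNge; apply/negP => hye.
case: (lerP (x + e) y) => hy.
- have := H1 y Iy hy; move: h1; rewrite ltr_norml => /andP[_ h1]; lra.
- have hy' : y <= x - e.
    move: hye; rewrite ler_normr => /orP[]; lra.
  have := H0 y Iy hy'; move: h0; rewrite ltr_norml => /andP[h0 _]; lra.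
Qed.

Lemma GC_loc (R : realType) (r : R) p t0 k0 d : GC r p -> I01 t0 -> 0 < k0 -> 0 < d ->
  exists2 eps, 0 < eps & forall w t k,
    `|w.1 - (sc k0 (p t0)).1| < eps -> `|w.2 - (sc k0 (p t0)).2| < eps ->
    I01 t -> w = sc k (p t) -> 0 < w.1 + w.2 /\ `|t - t0| < d.
Proof.
move=> g It0 k00 d0.
have [rho rho0 Hrho] := GC_inv g It0 d0.
have [a1 a2 a3] := GC_pos g It0.
set v := sc k0 (p t0).
have v1 : 0 <= v.1 by rewrite /v /sc /= mulr_ge0 // ltW.
have v2 : 0 <= v.2 by rewrite /v /sc /= mulr_ge0 // ltW.
have vS : 0 < v.1 + v.2 by rewrite /v /sc /= -mulrDr mulr_gt0.
exists (Num.min ((v.1 + v.2) / 4) (rho * (v.1 + v.2) / 4)).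
  by rewrite lt_min !divr_gt0 // mulr_gt0.
move=> w t k h1 h2 It ew.
have [b1 b2 b3] := GC_pos g It.
move: h1 h2; rewrite !lt_min => /andP[h1 h1'] /andP[h2 h2'].
have hw : (v.1 + v.2) / 2 < w.1 + w.2.
  move: h1 h2; rewrite !ltr_norml => /andP[h1a h1b] /andP[h2a h2b]; lra.
have wS : 0 < w.1 + w.2 by apply: lt_trans hw; rewrite divr_gt0.
split => //.
have k0' : 0 < k.
  move: wS; rewrite ew /sc /= -mulrDr => h.
  by rewrite -(pmulr_lgt0 _ b3).
apply: Hrho => //.
have -> : sg (p t) = sg w by rewrite ew sg_sc.
have -> : sg (p t0) = sg v by rewrite /v sg_sc.
rewrite sg_diff // normrM (ger0_norm (_ : 0 <= _^-1)) ?invr_ge0 ?mulr_ge0 ?ltW //.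
rewrite (ltr_pdivrMr _ _ (mulr_gt0 vS wS)).
have hc : `|cr v w| <= (v.1 + v.2) * (rho * (v.1 + v.2) / 4).
  have -> : cr v w = v.1 * (w.2 - v.2) - v.2 * (w.1 - v.1) by rewrite /cr; ring.
  set E := rho * (v.1 + v.2) / 4 in h1' h2' *.
  move: h1' h2'; rewrite !ltr_norml => /andP[p1 p2] /andP[p3 p4].
  have q1 : v.1 * (w.2 - v.2) <= v.1 * E by rewrite ler_wpM2l // ltW.
  have q2 : v.1 * (- E) <= v.1 * (w.2 - v.2) by rewrite ler_wpM2l // ltW.
  have q3 : v.2 * (w.1 - v.1) <= v.2 * E by rewrite ler_wpM2l // ltW.
  have q4 : v.2 * (- E) <= v.2 * (w.1 - v.1) by rewrite ler_wpM2l // ltW.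
  rewrite ler_norml; apply/andP; split; nra.
apply: (le_lt_trans hc).
have h3 : rho * ((v.1 + v.2) / 2) < rho * (w.1 + w.2) by rewrite ltr_pM2l.
have h4 : (v.1 + v.2) * (rho * ((v.1 + v.2) / 2)) < (v.1 + v.2) * (rho * (w.1 + w.2)).
  by rewrite ltr_pM2l.
have h5 : 0 < (v.1 + v.2) * (rho * (v.1 + v.2)) by rewrite !mulr_gt0.
set S := v.1 + v.2 in h3 h4 h5 *.
have -> : S * (rho * S / 4) = (S * (rho * (S / 2))) / 2 by field.
have -> : rho * (S * (w.1 + w.2)) = S * (rho * (w.1 + w.2)) by ring.
have : S * (rho * (S / 2)) / 2 < S * (rho * (S / 2)).
  have h6 : 0 < S * (rho * (S / 2)) by rewrite !mulr_gt0 // divr_gt0.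
  lra.
lra.
Qed.


Lemma GC_Sext (R : realType) (r : R) p : GC r p ->
  (exists2 m, 0 < m & forall t, I01 t -> m <= (p t).1 + (p t).2) /\
  (exists M, forall t, I01 t -> (p t).1 + (p t).2 <= M).
Proof.
move=> g; have [_ cp _ _ _] := g.
have cw := ctsS_within (ctsS_S cp) (lexx (0:R)) (lexx (1:R)).
split.
- have [c c01 Hc] := EVT_min ler01 cw.
  have Ic : I01 c by apply/I01P; move: c01; rewrite in_itv.
  have [_ _ h] := GC_pos g Ic.
  exists ((p c).1 + (p c).2); first exact: h.
  move=> t It; apply: Hc.
  by move/I01P: It; rewrite in_itv.
- have [c c01 Hc] := EVT_max ler01 cw.
  exists ((p c).1 + (p c).2) => t It; apply: Hc.
  by move/I01P: It; rewrite in_itv.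
Qed.

Lemma GC_Vout_open (R : realType) (r : R) p v : GC r p -> Vout p v ->
  exists2 eps, 0 < eps & forall w, Quad w -> `|w.1 - v.1| < eps -> `|w.2 - v.2| < eps ->
    Vout p w.
Proof.
move=> g [t0 [l [It0 l1 ev]]].
have [_ cp _ _ _] := g.
have [a1 a2 a3] := GC_pos g It0.
set S0 := (p t0).1 + (p t0).2 in a3.
have eta0 : 0 < (l - 1) * S0 / 3 by rewrite !divr_gt0 // mulr_gt0 // subr_gt0.
have [d1 d10 Hd1] := ctsS_S cp It0 eta0.
have l0 : 0 < l by apply: lt_trans l1.
have [e2 e20 He2] := GC_loc g It0 l0 d10.
exists (Num.min e2 ((l - 1) * S0 / 3)); first by rewrite lt_min e20 eta0.
move=> w Qw; rewrite !lt_min => /andP[h1 h1'] /andP[h2 h2'].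
have [t [It ew]] := GC_ray g Qw.
have [b1 b2 b3] := GC_pos g It.
rewrite ev in h1 h2 h1' h2'.
have [wS htt] := He2 w t _ h1 h2 It ew.
have hS : `|S0 - ((p t).1 + (p t).2)| < (l - 1) * S0 / 3 by apply: Hd1 => //; rewrite distrC.
exists t, ((w.1 + w.2) / ((p t).1 + (p t).2)); split => //.
rewrite ltr_pdivlMr // mul1r.
move: h1' h2' hS; rewrite /sc /= !ltr_norml => /andP[q1 q2] /andP[q3 q4] /andP[q5 q6].
rewrite -/S0 in q5 q6.
have : l * S0 = l * (p t0).1 + l * (p t0).2 by rewrite mulrDr.
nra.
Qed.

Lemma GC_Uin_open (R : realType) (r : R) p u : GC r p -> Uin p u ->
  exists2 eps, 0 < eps & forall w, Quad w -> `|w.1 - u.1| < eps -> `|w.2 - u.2| < eps ->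
    Uin p w.
Proof.
move=> g [t0 [l [It0 l0 l1 eu]]].
have [_ cp _ _ _] := g.
have [a1 a2 a3] := GC_pos g It0.
have [[m m0 Hm] _] := GC_Sext g.
case: (ltgtP 0 l) => hl; last first.
- exists (m / 2); first by rewrite divr_gt0.
  move=> w Qw; rewrite eu -hl /sc /= !mul0r !subr0.
  have [w1 w2] := Qw.
  rewrite !ger0_norm // => h1 h2.
  have [t [It ew]] := GC_ray g Qw.
  have [b1 b2 b3] := GC_pos g It.
  exists t, ((w.1 + w.2) / ((p t).1 + (p t).2)); split => //.
    by rewrite divr_ge0 // addr_ge0.
  rewrite ltr_pdivrMr // mul1r.
  have := Hm t It; lra.
- by move: l0; rewrite leNgt hl.
set S0 := (p t0).1 + (p t0).2 in a3.
have eta0 : 0 < (1 - l) * S0 / 3 by rewrite !divr_gt0 // mulr_gt0 // subr_gt0.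
have [d1 d10 Hd1] := ctsS_S cp It0 eta0.
have [e2 e20 He2] := GC_loc g It0 hl d10.
exists (Num.min e2 ((1 - l) * S0 / 3)); first by rewrite lt_min e20 eta0.
move=> w Qw; rewrite !lt_min => /andP[h1 h1'] /andP[h2 h2'].
have [t [It ew]] := GC_ray g Qw.
have [b1 b2 b3] := GC_pos g It.
rewrite eu in h1 h2 h1' h2'.
have [wS htt] := He2 w t _ h1 h2 It ew.
have hS : `|S0 - ((p t).1 + (p t).2)| < (1 - l) * S0 / 3 by apply: Hd1 => //; rewrite distrC.
exists t, ((w.1 + w.2) / ((p t).1 + (p t).2)); split => //.
  by rewrite divr_ge0 // ltW.
rewrite ltr_pdivrMr // mul1r.
move: h1' h2' hS; rewrite /sc /= !ltr_norml => /andP[q1 q2] /andP[q3 q4] /andP[q5 q6].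
rewrite -/S0 in q5 q6.
have : l * S0 = l * (p t0).1 + l * (p t0).2 by rewrite mulrDr.
nra.
Qed.

Lemma GC_sep (R : realType) (r : R) p : GC r p -> separated (Uin p) (Vout p).
Proof.
move=> g; split; rewrite -subset0.
- move=> v [cv Vv].
  have [e e0 He] := GC_Vout_open g Vv.
  have [w [Uw bw]] := cv _ (nbhsx_ballx v e e0).
  have [Qw _] := GC_Uin_sub g Uw.
  move: bw; rewrite /ball /= /prod_ball /ball /= => -[b1 b2].
  apply: (GC_UV_disj g Uw); apply: He => //; by rewrite distrC.
- move=> u [Uu cu].
  have [e e0 He] := GC_Uin_open g Uu.
  have [w [Vw bw]] := cu _ (nbhsx_ballx u e e0).
  have [Qw _] := GC_Vout_sub g Vw.
  move: bw; rewrite /ball /= /prod_ball /ball /= => -[b1 b2].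
  apply: (GC_UV_disj g _ Vw); apply: He => //; by rewrite distrC.
Qed.


Lemma sc_cont (R : realType) (u : R * R) : continuous (fun l : R => sc l u).
Proof.
move=> l; apply/cvg_ballP => e e0.
have c0 : 0 < `|u.1| + `|u.2| + 1 by rewrite ltr_wpDl // addr_ge0.
apply/nbhs_ballP.
exists (e / (`|u.1| + `|u.2| + 1)); first by rewrite /= divr_gt0.
move=> x; rewrite /ball /= => hx.
rewrite /prod_ball /ball /sc /=; split.
- rewrite -mulrBl normrM; apply: le_lt_trans (_ : `|l - x| * (`|u.1| + `|u.2| + 1) < e).
    by rewrite ler_wpM2l //; have := normr_ge0 u.2; have := normr_ge0 u.1; lra.
  by rewrite -ltr_pdivlMr.
- rewrite -mulrBl normrM; apply: le_lt_trans (_ : `|l - x| * (`|u.1| + `|u.2| + 1) < e).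
    by rewrite ler_wpM2l //; have := normr_ge0 u.2; have := normr_ge0 u.1; lra.
  by rewrite -ltr_pdivlMr.
Qed.

Lemma GC_Uin_conn (R : realType) (r : R) p : GC r p -> connected (Uin p).
Proof.
move=> g.
have -> : Uin p = \bigcup_(t in I01 (R:=R)) ((fun l => sc l (p t)) @` `[0, 1[%classic).
  apply/seteqP; split.
  - move=> z [t [l [It l0 l1 ->]]]; exists t => //; exists l => //.
    by rewrite /= in_itv /= l0 l1.
  - move=> z [t It [l]]; rewrite /= in_itv /= => /andP[l0 l1] <-.
    by exists t, l.
apply: bigcup_connected.
- exists (0, 0) => t It; exists 0; first by rewrite /= in_itv /= lexx ltr01.
  by rewrite /sc !mul0r.
- move=> t It; apply: connected_continuous_connected.
  + by apply/connected_intervalP; apply: interval_is_interval.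
  + by apply: continuous_subspaceT; apply: sc_cont.
Qed.

Lemma GC_comp_U (R : realType) (r : R) p x : GC r p -> Uin p x ->
  connected_component (Quad (R:=R) `\` (p @` I01 (R:=R))) x = Uin p.
Proof.
move=> g Ux; apply/seteqP; split.
- have Hsub : connected_component (Quad (R:=R) `\` (p @` I01 (R:=R))) x `<=` Uin p `|` Vout p.
    by apply: subset_trans (GC_dec g); apply: connected_component_sub.
  have [h|h] := connected_subset (GC_sep g) Hsub (@component_connected _ _ x) => //.
  exfalso; apply: (GC_UV_disj g Ux); apply: h.
  by apply: connected_component_refl; exact: (GC_Uin_sub g Ux).
- apply: connected_component_max => //.
  + exact: (GC_Uin_sub g).
  + exact: GC_Uin_conn g.
Qed.

Lemma GC_comp_V (R : realType) (r : R) p v : GC r p -> Vout p v ->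
  ~ bounded_set2 (connected_component (Quad (R:=R) `\` (p @` I01 (R:=R))) v).
Proof.
move=> g Vv [M HM].
have [t [l [It l1 ev]]] := Vv.
have [a1 a2 a3] := GC_pos g It.
have l0 : 0 < l by apply: lt_trans l1.
have vS : 0 < v.1 + v.2 by rewrite ev /sc /= -mulrDr mulr_gt0.
have v1 : 0 <= v.1 by rewrite ev /sc /= mulr_ge0 // ltW.
have v2 : 0 <= v.2 by rewrite ev /sc /= mulr_ge0 // ltW.
set N := 2 * (`|M| + 1) / (v.1 + v.2) + 1.
have N1 : 1 <= N by rewrite /N lerDr divr_ge0 // ?mulr_ge0 // ?addr_ge0 // ltW.
have sub : (fun c => sc c v) @` `[1, N]%classic `<=`
    connected_component (Quad (R:=R) `\` (p @` I01 (R:=R))) v.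
  apply: connected_component_max.
  - by exists 1; [rewrite /= in_itv /= lexx N1 | rewrite sc1].
  - move=> z [c]; rewrite /= in_itv /= => /andP[c1 _] <-.
    apply: (GC_Vout_sub g); exists t, (c * l); split => //.
      nra.
    by rewrite ev /sc /= !mulrA.
  - apply: connected_continuous_connected; first exact: segment_connected.
    by apply: continuous_subspaceT; apply: sc_cont.
have hN : connected_component (Quad (R:=R) `\` (p @` I01 (R:=R))) v (sc N v).
  by apply: sub; exists N => //; rewrite /= in_itv /= N1 lexx.
have [h1 h2] := HM _ hN.
have eN : N * (v.1 + v.2) = 2 * (`|M| + 1) + (v.1 + v.2).
  by rewrite /N mulrDl mul1r divfK // gt_eqF.
move: h1 h2; rewrite /sc /= !ger0_norm ?mulr_ge0 // ?(le_trans _ N1) //.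
have := ler_norm M; nra.
Qed.


Lemma GC_conv_help (R : realType) (r : R) p s u al be : GC r p ->
  (forall s t u, I01 s -> I01 u -> s <= t -> t <= u ->
     cr (p s) (p u) <= cr (p s) (p t) + cr (p t) (p u)) ->
  I01 s -> I01 u -> s <= u -> 0 <= al -> 0 <= be -> al + be < 1 ->
  Uin p (al * (p s).1 + be * (p u).1, al * (p s).2 + be * (p u).2).
Proof.
move=> g Hor Is Iu su al0 be0 ab1.
have [a1 a2 a3] := GC_pos g Is; have [b1 b2 b3] := GC_pos g Iu.
case: (ltgtP s u) su => // [su _|<- _]; last first.
  exists s, (al + be); split => //; first by rewrite addr_ge0.
  by rewrite /sc /= !mulrDl.
have [_ _ _ Hcr _] := g.
have D0 := Hcr _ _ Is Iu su.
set z := (al * (p s).1 + be * (p u).1, al * (p s).2 + be * (p u).2).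
have Qz : Quad z by rewrite /z /Quad /=; split; apply: addr_ge0; apply: mulr_ge0.
have c1 : cr (p s) z = be * cr (p s) (p u) by rewrite /z /cr /=; ring.
have c2 : cr (p u) z = - (al * cr (p s) (p u)) by rewrite /z /cr /=; ring.
have h1 : 0 <= cr (p s) z by rewrite c1 mulr_ge0 // ltW.
have h2 : cr (p u) z <= 0 by rewrite c2 oppr_le0 mulr_ge0 // ltW.
have [t [It st tu ez]] := GC_ivt g Is Iu (ltW su) Qz h1 h2.
have [c1' c2' c3'] := GC_pos g It.
set k := (z.1 + z.2) / ((p t).1 + (p t).2) in ez.
have [q1 q2] := Qz.
have k0 : 0 <= k.
  by rewrite /k; apply: divr_ge0; [apply: addr_ge0|apply: ltW].
exists t, k; split => //.
have Hst := Hor s t u Is Iu st tu.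
have e1 : cr (p s) z = k * cr (p s) (p t) by rewrite {1}ez /sc /cr /=; ring.
have e2 : cr z (p u) = k * cr (p t) (p u) by rewrite {1}ez /sc /cr /=; ring.
have e3 : cr z (p u) = al * cr (p s) (p u) by rewrite crC c2 opprK.
have hsum : (al + be) * cr (p s) (p u) = k * (cr (p s) (p t) + cr (p t) (p u)).
  rewrite [RHS]mulrDr -e1 -e2 e3 c1; ring.
have S0 : 0 < cr (p s) (p t) + cr (p t) (p u) by apply: lt_le_trans Hst.
have : k * (cr (p s) (p t) + cr (p t) (p u)) <= (al + be) * (cr (p s) (p t) + cr (p t) (p u)).
  by rewrite -hsum ler_wpM2l // addr_ge0.
rewrite ler_pM2r // => hk; apply: le_lt_trans hk ab1.
Qed.

Lemma GC_convex (R : realType) (r : R) p : GC r p ->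
  (forall s t u, I01 s -> I01 u -> s <= t -> t <= u ->
     cr (p s) (p u) <= cr (p s) (p t) + cr (p t) (p u)) ->
  convex_set2 (Uin p).
Proof.
move=> g Hor x y [s [la [Is la0 la1 ->]]] [u [mu [Iu mu0 mu1 ->]]] l l0 l1.
have hab : (1 - l) * la + l * mu < 1.
  have : (1 - l) * la <= (1 - l) * 1 by rewrite ler_wpM2l ?subr_ge0 // ltW.
  have : l * mu <= l * 1 by rewrite ler_wpM2l // ltW.
  case: (ltrP 0 l) => hl.
  - have : l * mu < l * 1 by rewrite ltr_pM2l.
    lra.
  - have hl0 : l = 0 by apply/eqP; rewrite eq_le hl l0.
    rewrite hl0 subr0 mul1r mul0r addr0.
    done.
have a0 : 0 <= (1 - l) * la by rewrite mulr_ge0 // subr_ge0.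
have b0 : 0 <= l * mu by rewrite mulr_ge0.
case: (lerP s u) => su.
- have := GC_conv_help g Hor Is Iu su a0 b0 hab.
  by rewrite /sc /= !mulrA.
- have hba : l * mu + (1 - l) * la < 1 by rewrite addrC.
  have := GC_conv_help g Hor Iu Is (ltW su) b0 a0 hba.
  rewrite /sc /= !mulrA.
  by rewrite (addrC (l * mu * _)) (addrC (l * mu * _)).
Qed.

Lemma GC_orient (R : realType) (r : R) p : GC r p -> convex_set2 (Uin p) ->
  forall s t u, I01 s -> I01 u -> s <= t -> t <= u ->
     cr (p s) (p u) <= cr (p s) (p t) + cr (p t) (p u).
Proof.
move=> g Hc s t u Is Iu st tu.
have It : I01 t.
  by apply/I01P; move/I01P: Is => /andP[s0 _]; move/I01P: Iu => /andP[_ u1];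
    rewrite (le_trans s0 st) (le_trans tu u1).
case: (ltgtP s t) st => // [st _|<- _]; last by rewrite /cr; lra.
case: (ltgtP t u) tu => // [tu _|-> _]; last by rewrite /cr; lra.
have [_ _ _ Hcr _] := g.
have Dst := Hcr _ _ Is It st; have Dtu := Hcr _ _ It Iu tu.
have Dsu := Hcr _ _ Is Iu (lt_trans st tu).
set A := cr (p s) (p t) in Dst *; set B := cr (p t) (p u) in Dtu *.
set D := cr (p s) (p u) in Dsu *.
rewrite leNgt; apply/negP => hlt.
have S0 : 0 < A + B by rewrite addr_gt0.
set la := (D + (A + B)) / (2 * D).
have la0 : 0 <= la by rewrite /la; apply: divr_ge0; [apply: addr_ge0; apply: ltW|apply: mulr_ge0; apply: ltW].
have laD' : la * D = (D + (A + B)) / 2.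
  by rewrite /la; field; rewrite gt_eqF.
have la1 : la < 1.
  have : la * D < 1 * D by rewrite laD' mul1r; lra.
  by rewrite ltr_pM2r.
have laD : A + B < la * D by rewrite laD'; lra.
have key1 : B * (p s).1 + A * (p u).1 = D * (p t).1 by rewrite /A /B /D /cr; ring.
have key2 : B * (p s).2 + A * (p u).2 = D * (p t).2 by rewrite /A /B /D /cr; ring.
have Ux : Uin p (sc la (p s)) by exists s, la.
have Uy : Uin p (sc la (p u)) by exists u, la.
set th := A / (A + B).
have th0 : 0 <= th by rewrite /th; apply: divr_ge0; apply: ltW.
have th1 : th <= 1 by rewrite /th ler_pdivrMr // mul1r lerDl ltW.
have := Hc _ _ Ux Uy th th0 th1.
have -> : ((1 - th) * (sc la (p s)).1 + th * (sc la (p u)).1,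
           (1 - th) * (sc la (p s)).2 + th * (sc la (p u)).2) = sc (la * D / (A + B)) (p t).
  have ABn : A + B != 0 by rewrite gt_eqF.
  rewrite /sc /th /=; clearbody A B D; congr pair.
  - have -> : la * D / (A + B) * (p t).1 = la * (D * (p t).1) / (A + B) by field.
    by rewrite -key1; field.
  - have -> : la * D / (A + B) * (p t).2 = la * (D * (p t).2) / (A + B) by field.
    by rewrite -key2; field.
move=> Uz; apply: (GC_UV_disj g Uz); exists t, (la * D / (A + B)); split => //.
by rewrite ltr_pdivlMr // mul1r.
Qed.


Lemma sq_lt (R : realType) (a b : R) : 0 <= a -> 0 <= b -> (a < b <-> a ^+ 2 < b ^+ 2).
Proof.
move=> a0 b0; split => h; first by rewrite ltrXn2r.
rewrite ltNge; apply/negP => hb.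
have : b ^+ 2 <= a ^+ 2 by rewrite !expr2; apply: ler_pM.
lra.
Qed.

Lemma sq_le (R : realType) (a b : R) : 0 <= a -> 0 <= b -> (a <= b <-> a ^+ 2 <= b ^+ 2).
Proof.
move=> a0 b0; split => h; first by rewrite !expr2; apply: ler_pM.
rewrite leNgt; apply/negP => hb.
have : b ^+ 2 < a ^+ 2 by rewrite ltrXn2r.
lra.
Qed.

Lemma arg_lt_cr (R : realType) (u w : R * R) : Quad u -> Quad w ->
  u <> (0, 0) -> w <> (0, 0) -> (arg u < arg w <-> 0 < cr u w).
Proof.
case: u => u1 u2; case: w => w1 w2 [/= u10 u20] [/= w10 w20] un wn.
have pu : 0 < u1 ^+ 2 + u2 ^+ 2.
  rewrite !expr2; case: (ltgtP 0 u1) u10 => // [h _|h _]; first by nra.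
  case: (ltgtP 0 u2) u20 => // [h' _|h' _]; first by nra.
  by exfalso; apply: un; rewrite -h -h'.
have pw : 0 < w1 ^+ 2 + w2 ^+ 2.
  rewrite !expr2; case: (ltgtP 0 w1) w10 => // [h _|h _]; first by nra.
  case: (ltgtP 0 w2) w20 => // [h' _|h' _]; first by nra.
  by exfalso; apply: wn; rewrite -h -h'.
rewrite /arg /cr /=.
set Nu := Num.sqrt (u1 ^+ 2 + u2 ^+ 2); set Nw := Num.sqrt (w1 ^+ 2 + w2 ^+ 2).
have Nu0 : 0 < Nu by rewrite sqrtr_gt0.
have Nw0 : 0 < Nw by rewrite sqrtr_gt0.
have Nu2 : Nu ^+ 2 = u1 ^+ 2 + u2 ^+ 2 by rewrite sqr_sqrtr // ltW.
have Nw2 : Nw ^+ 2 = w1 ^+ 2 + w2 ^+ 2 by rewrite sqr_sqrtr // ltW.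
have hu1 : u1 <= Nu.
  by apply/(sq_le u10 (ltW Nu0)); rewrite Nu2 lerDl sqr_ge0.
have hw1 : w1 <= Nw.
  by apply/(sq_le w10 (ltW Nw0)); rewrite Nw2 lerDl sqr_ge0.
have cu : -1 <= u1 / Nu <= 1.
  apply/andP; split; last by rewrite ler_pdivrMr // mul1r.
  by apply: le_trans (_ : 0 <= _); [lra|apply: divr_ge0 => //; apply: ltW].
have cw : -1 <= w1 / Nw <= 1.
  apply/andP; split; last by rewrite ler_pdivrMr // mul1r.
  by apply: le_trans (_ : 0 <= _); [lra|apply: divr_ge0 => //; apply: ltW].
have [/andP[au0 aupi] cau] := acos_def cu.
have [/andP[aw0 awpi] caw] := acos_def cw.
rewrite -ltr_cos ?in_itv /= ?au0 ?aupi ?aw0 ?awpi // cau caw.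
rewrite ltr_pdivrMr // mulrAC ltr_pdivlMr //.
have e1 : (w1 * Nu) ^+ 2 = w1 ^+ 2 * (u1 ^+ 2 + u2 ^+ 2) by rewrite exprMn Nu2.
have e2 : (u1 * Nw) ^+ 2 = u1 ^+ 2 * (w1 ^+ 2 + w2 ^+ 2) by rewrite exprMn Nw2.
rewrite (sq_lt (mulr_ge0 w10 (ltW Nu0)) (mulr_ge0 u10 (ltW Nw0))) e1 e2.
have -> : (w1 ^+ 2 * (u1 ^+ 2 + u2 ^+ 2) < u1 ^+ 2 * (w1 ^+ 2 + w2 ^+ 2)) = ((u2 * w1) ^+ 2 < (u1 * w2) ^+ 2).
  rewrite !exprMn; apply/idP/idP => h; nra.
rewrite -(sq_lt (mulr_ge0 u20 w10) (mulr_ge0 u10 w20)).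
by rewrite subr_gt0.
Qed.


Definition pd (R : realType) (d : R -> R -> R) (t : R) : R * R := (d t 1, d t 0).

Lemma PI_ge0 (R : realType) (d : R -> R -> R) x y : metric_on01 d -> I01 x -> I01 y ->
  0 <= d x y.
Proof.
move=> [h0 _ hs ht] Ix Iy.
have := ht x y x Ix Iy Ix; rewrite h0 // (hs y x) //; lra.
Qed.

Lemma PI_cr (R : realType) (d : R -> R -> R) x y : ptolemy_interval d ->
  I01 x -> I01 y -> x <= y -> cr (pd d x) (pd d y) = d 0 1 * d x y.
Proof.
move=> [[h0 h1 hs ht] _ hp] Ix Iy xy.
have /I01P/andP[x0 _] := Ix; have /I01P/andP[_ y1] := Iy.
have e := hp 0 x y 1 (I01_0 R) (I01_1 R) x0 xy y1.
have s1 := hs y 0 Iy (I01_0 R); have s2 := hs x 0 Ix (I01_0 R); have s3 := hs y x Iy Ix.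
rewrite /cr /pd /= s1 s2 (mulrC (d x 1)) e -s3; ring.
Qed.

Lemma PI_cr_abs (R : realType) (d : R -> R -> R) x y : ptolemy_interval d ->
  I01 x -> I01 y -> `|cr (pd d x) (pd d y)| = d 0 1 * d x y.
Proof.
move=> pi Ix Iy; have [[h0 h1 hs ht] _ _] := pi.
have r0 : 0 <= d 0 1 by apply: PI_ge0 (I01_0 R) (I01_1 R); case: pi.
case: (lerP x y) => xy.
- by rewrite PI_cr // ger0_norm // mulr_ge0 // PI_ge0 //; case: pi.
- rewrite crC normrN PI_cr // ?ltW // ger0_norm ?(hs y x) //.
  by rewrite mulr_ge0 // PI_ge0 //; case: pi.
Qed.

Lemma PI_ctsS (R : realType) (d : R -> R -> R) c : ptolemy_interval d -> I01 c ->
  ctsS (fun t => d t c).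
Proof.
move=> [[h0 h1 hs ht] htop _] Ic t It e e0.
set U := [set y | I01 y /\ d t y < e].
have UI : U `<=` I01 (R:=R) by move=> y [].
have dU : d_open d U.
  move=> y [Iy hy]; exists (e - d t y); first by rewrite subr_gt0.
  move=> z Iz hz; split => //.
  have := ht t y z It Iy Iz; lra.
have Ut : U t by split => //; rewrite h0.
have [del del0 Hdel] := (proj1 (htop U UI) dU) t Ut.
exists del => // s Is ts; have [_ hts] := Hdel s Is ts.
have t1 := ht t s c It Is Ic; have t2 := ht s t c Is It Ic.
rewrite (hs s t) // in t2.
rewrite ltr_norml; apply/andP; split; lra.
Qed.

Lemma PI_GC (R : realType) (r : R) (d : R -> R -> R) : 0 < r -> ptolemy_interval d ->
  d 0 1 = r -> GC r (pd d).
Proof.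
move=> r0 pi dr; have [[h0 h1 hs ht] _ _] := pi; have mt : metric_on01 d by case: pi.
split => //.
- apply/ctsI_split; split.
  + exact: (PI_ctsS pi (I01_1 R)).
  + exact: (PI_ctsS pi (I01_0 R)).
- move=> t It; rewrite /pd /=.
  have a1 := PI_ge0 mt It (I01_1 R); have a2 := PI_ge0 mt It (I01_0 R).
  split => //; rewrite lt_def addr_ge0 // andbT.
  apply/eqP => e.
  have e1 : d t 1 = 0 by lra.
  have e2 : d t 0 = 0 by lra.
  have := h1 _ _ It (I01_1 R) e1; have := h1 _ _ It (I01_0 R) e2.
  by move=> -> /eqP; rewrite eq_sym oner_eq0.
- move=> s t Is It st; rewrite PI_cr // ?ltW // dr mulr_gt0 //.
  rewrite lt_def PI_ge0 // andbT; apply/eqP => e.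
  by move: st; rewrite (h1 _ _ Is It e) ltxx.
- by rewrite /pd (h0 0 (I01_0 R)) (h0 1 (I01_1 R)) (hs 1 0 (I01_1 R) (I01_0 R)) dr.
Qed.

Lemma part1 (R : realType) (r : R) (hr : 0 < r) :
  forall d : R -> R -> R, ptolemy_interval d -> d 0 1 = r ->
     convex_curve_set r (curve_of d).
Proof.
move=> d pi dr.
have g := PI_GC hr pi dr.
have [_ cp pos cr0 [p0 p1]] := g.
have [[h0 h1 hs ht] _ _] := pi; have mt : metric_on01 d by case: pi.
exists (pd d); split => //.
- split.
  + exact/ctsIP.
  + move=> t It; have [a1 a2 a3] := pos t It; split; first by split.
    by move=> e; move: a3; rewrite e /= addr0 ltxx.
  + move=> s t Is It st.
    have [a1 a2 a3] := pos s Is; have [b1 b2 b3] := pos t It.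
    apply/arg_lt_cr; [by split|by split| | |exact: cr0].
    * by move=> e; move: a3; rewrite e /= addr0 ltxx.
    * by move=> e; move: b3; rewrite e /= addr0 ltxx.
  + by [].
  + move=> x Qx hb.
    have [Ux|Vx] := GC_dec g Qx.
    * rewrite (GC_comp_U g Ux); apply: (GC_convex g) => s t u Is Iu st tu.
      have It : I01 t.
        by apply/I01P; move/I01P: Is => /andP[s0 _]; move/I01P: Iu => /andP[_ u1];
          rewrite (le_trans s0 st) (le_trans tu u1).
      rewrite !PI_cr // ?(le_trans st tu) // dr -mulrDr ler_pM2l //.
      exact: ht.
    * by exfalso; apply: (GC_comp_V g Vx).
- move=> z [t It <-]; rewrite /pd.
  have a1 := PI_ge0 mt It (I01_1 R); have a2 := PI_ge0 mt It (I01_0 R).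
  split; first by split.
  exists (d t 1 / r), (d t 0 / r); split.
  + split.
    * by apply: divr_ge0 => //; apply: ltW.
    * by apply: divr_ge0 => //; apply: ltW.
    * rewrite -mulrDl ler_pdivlMr // mul1r -dr.
      have := ht 0 t 1 (I01_0 R) It (I01_1 R); rewrite (hs 0 t (I01_0 R) It); lra.
    * rewrite ler_pdivrMr // mulrDl divfK ?gt_eqF // mul1r.
      have := ht t 1 0 It (I01_1 R) (I01_0 R); rewrite (hs 1 0 (I01_1 R) (I01_0 R)) dr; lra.
    * rewrite ler_pdivrMr // mulrDl divfK ?gt_eqF // mul1r.
      have := ht t 0 1 It (I01_0 R) (I01_1 R); rewrite dr; lra.
  + rewrite /e1 /e2 /=; congr pair.
    * by rewrite mulr0 addr0 divfK // gt_eqF.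
    * by rewrite mulr0 add0r divfK // gt_eqF.
Qed.


Lemma CC_GC (R : realType) (r : R) (p : R -> R * R) : 0 < r ->
  convex_curve p (e1 r) (e2 r) -> GC r p.
Proof.
move=> r0 [cp pos ar [p0 p1] _]; split => //.
- exact/ctsIP.
- move=> t It; have [[a1 a2] nz] := pos t It; split => //.
  rewrite lt_def addr_ge0 // andbT; apply/eqP => e.
  apply: nz; case: (p t) a1 a2 e => a b /= a1 a2 e; congr pair; lra.
- move=> s t Is It st.
  have [Qs nzs] := pos s Is; have [Qt nzt] := pos t It.
  by apply/(arg_lt_cr Qs Qt nzs nzt); apply: ar.
Qed.

Lemma CC_convex (R : realType) (r : R) (p : R -> R * R) : 0 < r ->
  convex_curve p (e1 r) (e2 r) -> convex_set2 (Uin p).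
Proof.
move=> r0 cc; have g := CC_GC r0 cc.
have [_ _ _ _ hc] := cc.
have U0 := GC_Uin0 g.
have Q0 := GC_Uin_sub g U0.
rewrite -(GC_comp_U g U0); apply: hc => //.
rewrite (GC_comp_U g U0).
have [_ [M HM]] := GC_Sext g.
exists M => z [t [l [It l0 l1 ->]]].
have [a1 a2 a3] := GC_pos g It.
have hS := HM t It.
rewrite /sc /= !ger0_norm ?mulr_ge0 //; split.
- have : l * (p t).1 <= 1 * (p t).1 by rewrite ler_wpM2r // ltW.
  lra.
- have : l * (p t).2 <= 1 * (p t).2 by rewrite ler_wpM2r // ltW.
  lra.
Qed.

Definition TT (R : realType) (r : R) (p : R -> R * R) := forall t, I01 t ->
  [/\ r <= (p t).1 + (p t).2, (p t).2 <= (p t).1 + r & (p t).1 <= (p t).2 + r].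

Lemma CC_TT (R : realType) (r : R) (p : R -> R * R) (A : set (R * R)) : 0 < r ->
  p @` I01 (R:=R) = A -> A `<=` Tset (e1 r) (e2 r) -> TT r p.
Proof.
move=> r0 pA AT t It.
have : A (p t) by rewrite -pA; exists t.
move=> /AT [_ [l [m [[l0 m0 lm1 ml lm] e]]]].
move: e; rewrite /e1 /e2 /= !mulr0 addr0 add0r => e.
rewrite e /=; split; nra.
Qed.

Lemma cr_ge0 (R : realType) (r : R) p s t : GC r p -> I01 s -> I01 t -> s <= t ->
  0 <= cr (p s) (p t).
Proof.
move=> g Is It; rewrite le_eqVlt => /orP[/eqP <-|st].
  by rewrite /cr mulrC subrr.
have [_ _ _ H _] := g; exact/ltW/H.
Qed.

Lemma base_ineq (R : realType) (r : R) p x y : TT r p -> GC r p -> I01 x -> I01 y ->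
  cr (p x) (p y) <= r * ((p x).1 + (p y).1) /\ cr (p x) (p y) <= r * ((p x).2 + (p y).2).
Proof.
move=> T g Ix Iy.
have [a1 a2 _] := GC_pos g Ix; have [b1 b2 _] := GC_pos g Iy.
have [t1 t2 t3] := T x Ix; have [u1 u2 u3] := T y Iy.
rewrite /cr; split.
- have h1 : 0 <= (p x).1 * ((p y).1 + r - (p y).2) by rewrite mulr_ge0 // subr_ge0.
  have h2 : 0 <= (p y).1 * ((p x).2 + r - (p x).1) by rewrite mulr_ge0 // subr_ge0.
  nra.
- have h1 : 0 <= (p y).2 * ((p x).2 + r - (p x).1) by rewrite mulr_ge0 // subr_ge0.
  have h2 : 0 <= (p x).2 * ((p y).1 + r - (p y).2) by rewrite mulr_ge0 // subr_ge0.
  nra.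
Qed.

Lemma I01_between (R : realType) (s t u : R) : I01 s -> I01 u -> s <= t -> t <= u -> I01 t.
Proof.
move=> /I01P/andP[s0 _] /I01P/andP[_ u1] st tu.
by apply/I01P; rewrite (le_trans s0 st) (le_trans tu u1).
Qed.

Lemma tri_ii (R : realType) (r : R) p s t u : TT r p -> GC r p ->
  (forall s t u, I01 s -> I01 u -> s <= t -> t <= u ->
     cr (p s) (p u) <= cr (p s) (p t) + cr (p t) (p u)) ->
  I01 s -> I01 u -> s <= t -> t <= u ->
  cr (p s) (p t) <= cr (p s) (p u) + cr (p t) (p u).
Proof.
move=> T g Hor Is Iu st tu.
have It := I01_between Is Iu st tu.
have [r0 _ _ _ [p0 p1]] := g.
have [a1 a2 _] := GC_pos g Is; have [b1 b2 _] := GC_pos g It; have [c1 c2 _] := GC_pos g Iu.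
have A0 := cr_ge0 g Is It st; have B0 := cr_ge0 g It Iu tu.
have D0 := cr_ge0 g Is Iu (le_trans st tu).
have cr1 : forall x, cr (p x) (p 1) = r * (p x).1.
  by move=> x; rewrite p1 /cr /=; ring.
have /I01P/andP[_ u1] := Iu.
have H1 := Hor t u 1 It (I01_1 R) tu u1.
rewrite !cr1 in H1.
have Pl : cr (p s) (p u) * (r * (p t).1) =
          cr (p s) (p t) * (r * (p u).1) + (r * (p s).1) * cr (p t) (p u).
  by rewrite /cr; ring.
have [bs _] := base_ineq T g Is Iu.
have [bst _] := base_ineq T g Is It.
case: (ltgtP 0 (p u).1) c1 => // [cu _|cu _].
- set A := cr (p s) (p t) in A0 Pl *; set B := cr (p t) (p u) in B0 Pl H1 *.
  set D := cr (p s) (p u) in D0 Pl bs *.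
  have h1 : (r * (p t).1) * D <= (B + r * (p u).1) * D by rewrite ler_wpM2r.
  have h2 : B * (D - r * (p s).1) <= B * (r * (p u).1) by rewrite ler_wpM2l //; lra.
  have h3 : r * (p u).1 * (A - D - B) <= 0 by nra.
  have ru : 0 < r * (p u).1 by rewrite mulr_gt0.
  have : A - D - B <= 0.
    by rewrite -(pmulr_rle0 _ ru).
  lra.
- have u_1 : u = 1.
    apply: (GC_cr_eq0 g Iu (I01_1 R)); rewrite cr1 -cu mulr0 //.
  subst u; rewrite !cr1; lra.
Qed.

Lemma tri_iii (R : realType) (r : R) p s t u : TT r p -> GC r p ->
  (forall s t u, I01 s -> I01 u -> s <= t -> t <= u ->
     cr (p s) (p u) <= cr (p s) (p t) + cr (p t) (p u)) ->
  I01 s -> I01 u -> s <= t -> t <= u ->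
  cr (p t) (p u) <= cr (p s) (p t) + cr (p s) (p u).
Proof.
move=> T g Hor Is Iu st tu.
have It := I01_between Is Iu st tu.
have [r0 _ _ _ [p0 p1]] := g.
have [a1 a2 _] := GC_pos g Is; have [b1 b2 _] := GC_pos g It; have [c1 c2 _] := GC_pos g Iu.
have A0 := cr_ge0 g Is It st; have B0 := cr_ge0 g It Iu tu.
have D0 := cr_ge0 g Is Iu (le_trans st tu).
have cr0 : forall x, cr (p 0) (p x) = r * (p x).2.
  by move=> x; rewrite p0 /cr /=; ring.
have /I01P/andP[s0 _] := Is.
have H1 := Hor 0 s t (I01_0 R) It s0 st.
rewrite !cr0 in H1.
have Pl : (r * (p t).2) * cr (p s) (p u) =
          (r * (p s).2) * cr (p t) (p u) + (r * (p u).2) * cr (p s) (p t).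
  by rewrite /cr; ring.
have [_ bs] := base_ineq T g Is Iu.
have [_ btu] := base_ineq T g It Iu.
case: (ltgtP 0 (p s).2) a2 => // [cs _|cs _].
- set A := cr (p s) (p t) in A0 Pl H1 *; set B := cr (p t) (p u) in B0 Pl *.
  set D := cr (p s) (p u) in D0 Pl bs *.
  have h1 : (r * (p t).2) * D <= (r * (p s).2 + A) * D by rewrite ler_wpM2r.
  have h2 : A * (D - r * (p u).2) <= A * (r * (p s).2) by rewrite ler_wpM2l //; lra.
  have h3 : r * (p s).2 * (B - A - D) <= 0 by nra.
  have rs : 0 < r * (p s).2 by rewrite mulr_gt0.
  have : B - A - D <= 0.
    by rewrite -(pmulr_rle0 _ rs).
  lra.
- have s_0 : s = 0.
    apply: (GC_cr_eq0 g Is (I01_0 R)); rewrite crC cr0 -cs mulr0 oppr0 //.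
  subst s; rewrite !cr0; lra.
Qed.

Definition acr (R : realType) (p : R -> R * R) (x y : R) : R := `|cr (p x) (p y)|.

Lemma acrC (R : realType) (p : R -> R * R) x y : acr p x y = acr p y x.
Proof. by rewrite /acr crC normrN. Qed.

Lemma acr_le (R : realType) (r : R) p x y : GC r p -> I01 x -> I01 y -> x <= y ->
  acr p x y = cr (p x) (p y).
Proof. by move=> g Ix Iy xy; rewrite /acr ger0_norm // (cr_ge0 g). Qed.

Lemma tri_sorted (R : realType) (r : R) p s t u : TT r p -> GC r p ->
  (forall s t u, I01 s -> I01 u -> s <= t -> t <= u ->
     cr (p s) (p u) <= cr (p s) (p t) + cr (p t) (p u)) ->
  I01 s -> I01 u -> s <= t -> t <= u ->
  [/\ acr p s u <= acr p s t + acr p t u, acr p s t <= acr p s u + acr p t u &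
      acr p t u <= acr p s t + acr p s u].
Proof.
move=> T g Hor Is Iu st tu.
have It := I01_between Is Iu st tu.
rewrite !(acr_le g) //; last exact: le_trans st tu.
split; [exact: Hor|exact: (tri_ii T g Hor)|exact: (tri_iii T g Hor)].
Qed.

Lemma tri_abs (R : realType) (r : R) p x y z : TT r p -> GC r p ->
  (forall s t u, I01 s -> I01 u -> s <= t -> t <= u ->
     cr (p s) (p u) <= cr (p s) (p t) + cr (p t) (p u)) ->
  I01 x -> I01 y -> I01 z -> acr p x z <= acr p x y + acr p y z.
Proof.
move=> T g Hor Ix Iy Iz.
case: (lerP x y) => xy; case: (lerP y z) => yz; case: (lerP x z) => xz.
- by have [] := tri_sorted T g Hor Ix Iz xy yz.
- by have [] := tri_sorted T g Hor Ix Iz xy yz.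
- have [_ h _] := tri_sorted T g Hor Ix Iy xz (ltW yz).
  by move: h; rewrite (acrC p z y); lra.
- have [_ h _] := tri_sorted T g Hor Iz Iy (ltW xz) xy.
  by move: h; rewrite (acrC p z x) (acrC p y z) (acrC p z y); lra.
- have [_ _ h] := tri_sorted T g Hor Iy Iz (ltW xy) xz.
  by move: h; rewrite (acrC p y x); lra.
- have [_ _ h] := tri_sorted T g Hor Iy Ix yz (ltW xz).
  by move: h; rewrite (acrC p y x) (acrC p z x) (acrC p x y); lra.
- by exfalso; have := lt_trans yz xy; rewrite ltNge xz.
- have [h _ _] := tri_sorted T g Hor Iz Ix (ltW yz) (ltW xy).
  by move: h; rewrite (acrC p z x) (acrC p z y) (acrC p y x); lra.
Qed.

Lemma part3 (R : realType) (r : R) (hr : 0 < r) :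
  forall A : set (R * R), convex_curve_set r A ->
     exists d : R -> R -> R,
       [/\ ptolemy_interval d, d 0 1 = r &
           (curve_of d = A \/ curve_of d = reflect_set A)].
Proof.
move=> A [p [cc pA AT]].
have g := CC_GC hr cc.
have [_ cp pos _ [p0 p1]] := g.
have T := CC_TT hr pA AT.
have Hor := GC_orient g (CC_convex hr cc).
have rn : r != 0 by rewrite gt_eqF.
exists (fun x y => acr p x y / r).
have dt1 : forall t, I01 t -> acr p t 1 / r = (p t).1.
  move=> t It; have [a1 _ _] := GC_pos g It.
  by rewrite /acr p1 /cr /= mulr0 subr0 (ger0_norm (mulr_ge0 a1 (ltW hr))) mulfK.
have dt0 : forall t, I01 t -> acr p t 0 / r = (p t).2.
  move=> t It; have [_ a2 _] := GC_pos g It.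
  by rewrite /acr p0 /cr /= mulr0 sub0r normrN (ger0_norm (mulr_ge0 a2 (ltW hr))) mulfK.
split; last first.
- left; rewrite /curve_of -pA; apply: eq_imagel => t It.
  by rewrite dt1 // dt0 //; case: (p t).
- by rewrite (dt1 0 (I01_0 R)) p0.
split.
- split.
  + by move=> x Ix; rewrite /acr /cr (mulrC (p x).1) subrr normr0 mul0r.
  + move=> x y Ix Iy /eqP; rewrite mulf_eq0 invr_eq0 (negPf rn) orbF normr_eq0 => /eqP e.
    exact: (GC_cr_eq0 g Ix Iy e).
  + by move=> x y Ix Iy; rewrite acrC.
  + move=> x y z Ix Iy Iz; rewrite -mulrDl ler_pM2r ?invr_gt0 //.
    exact: (tri_abs T g Hor).
- move=> U UI; split.
  + move=> dU x Ux; have [e e0 He] := dU x Ux.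
    have Ix := UI x Ux.
    have [del del0 Hdel] := ctsS_crl (p x) cp Ix (mulr_gt0 e0 hr).
    exists del => // y Iy xy; apply: He => //.
    have := Hdel y Iy xy; rewrite /cr mulrC subrr sub0r normrN -/(cr (p x) (p y)) => h.
    by rewrite /acr ltr_pdivrMr.
  + move=> sU x Ux; have [eps eps0 He] := sU x Ux.
    have Ix := UI x Ux.
    have [rho rho0 Hrho] := GC_inv g Ix eps0.
    exists (rho * r); first by rewrite mulr_gt0.
    move=> y Iy dxy; apply: He => //; rewrite distrC; apply: Hrho => //.
    have [a1 a2 a3] := GC_pos g Ix; have [b1 b2 b3] := GC_pos g Iy.
    have [t1 _ _] := T x Ix; have [u1 _ _] := T y Iy.
    have SS : 0 < ((p x).1 + (p x).2) * ((p y).1 + (p y).2) by rewrite mulr_gt0.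
    have SS1 : 0 <= (((p x).1 + (p x).2) * ((p y).1 + (p y).2))^-1 by rewrite invr_ge0 ltW.
    rewrite sg_diff // normrM (ger0_norm SS1).
    move: dxy; rewrite /acr (ltr_pdivrMr _ _ hr) => h.
    rewrite (ltr_pdivrMr _ _ SS).
    apply: (lt_le_trans h); rewrite -mulrA; apply: ler_wpM2l; first exact: ltW.
    by apply: ler_pM => //; apply: ltW.
- move=> x1 x2 x3 x4 I1 I4 h12 h23 h34.
  have I2 := I01_between I1 I4 h12 (le_trans h23 h34).
  have I3 := I01_between I1 I4 (le_trans h12 h23) h34.
  have h13 := le_trans h12 h23; have h24 := le_trans h23 h34; have h14 := le_trans h13 h34.
  rewrite (acrC p x3 x2) !(acr_le g) //.
  by rewrite /cr; field.
Qed.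


Lemma iso_back (R : realType) (r : R) (d d' : R -> R -> R) (sig : R * R -> R * R) :
  0 < r -> ptolemy_interval d -> d 0 1 = r -> ptolemy_interval d' -> d' 0 1 = r ->
  (forall u w, `|cr (sig u) (sig w)| = `|cr u w|) ->
  (forall x, I01 x -> exists y, I01 y /\ pd d' y = sig (pd d x)) ->
  (forall y, I01 y -> exists x, I01 x /\ pd d' y = sig (pd d x)) ->
  isometric01 d d'.
Proof.
move=> r0 pi dr pi' dr' hsig ex1 ex2.
have g' := PI_GC r0 pi' dr'.
pose f x := xget 0 [set y | I01 y /\ pd d' y = sig (pd d x)].
have fP : forall x, I01 x -> I01 (f x) /\ pd d' (f x) = sig (pd d x).
  move=> x Ix; rewrite /f; apply: (xgetPex 0 (P := [set y | I01 y /\ pd d' y = sig (pd d x)])).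
  by have [y hy] := ex1 x Ix; exists y.
exists f; split.
- by move=> x Ix; case: (fP x Ix).
- move=> y Iy; have [x [Ix ex]] := ex2 y Iy.
  exists x => //; have [Ifx efx] := fP x Ix.
  apply: (GC_cr_eq0 g' Ifx Iy); rewrite efx -ex /cr; ring.
- move=> x y Ix Iy.
  have [Ifx efx] := fP x Ix; have [Ify efy] := fP y Iy.
  have h1 := PI_cr_abs pi' Ifx Ify; have h2 := PI_cr_abs pi Ix Iy.
  rewrite efx efy hsig h2 dr' dr in h1.
  have rn : r != 0 by rewrite gt_eqF.
  by apply: (mulfI rn); rewrite h1.
Qed.

Lemma PI_ball_open (R : realType) (d : R -> R -> R) t e : metric_on01 d -> I01 t ->
  d_open d [set y | I01 y /\ d t y < e].
Proof.
move=> [h0 h1 hs ht] It y [Iy hy]; exists (e - d t y); first by rewrite subr_gt0.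
move=> z Iz hz; split => //.
have := ht t y z It Iy Iz; lra.
Qed.

Lemma iso_cts (R : realType) (d d' : R -> R -> R) (f : R -> R) :
  ptolemy_interval d -> ptolemy_interval d' ->
  (forall x, I01 x -> I01 (f x)) ->
  (forall x y, I01 x -> I01 y -> d' (f x) (f y) = d x y) -> ctsS f.
Proof.
move=> [md htop _] [md' htop' _] fI fiso t It e e0.
have Ift := fI t It.
set U := [set z | I01 z /\ `|f t - z| < e].
have UI : U `<=` I01 (R:=R) by move=> z [].
have sU : std_open U.
  move=> z [Iz hz]; exists (e - `|f t - z|); first by rewrite subr_gt0.
  move=> y Iy hy; split => //.
  have := ler_distD z (f t) y; lra.
have Uft : U (f t) by split => //; rewrite subrr normr0.
have [e' e'0 He'] := (proj2 (htop' U UI) sU) (f t) Uft.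
set W := [set y | I01 y /\ d t y < e'].
have WI : W `<=` I01 (R:=R) by move=> y [].
have dW : d_open d W := PI_ball_open (e := e') md It.
have [h0 _ _ _] := md.
have Wt : W t by split => //; rewrite h0.
have [del del0 Hdel] := (proj1 (htop W WI) dW) t Wt.
exists del => // s Is ts.
have [_ hW] := Hdel s Is ts.
have [_ hU] : U (f s) by apply: He' => //; [exact: fI | rewrite fiso].
done.
Qed.

Lemma inI01 (R : realType) (x : R) : (x \in `[0, 1]%R) <-> I01 x.
Proof. by rewrite I01P in_itv. Qed.

Lemma iso_fwd (R : realType) (r : R) (d d' : R -> R -> R) :
  0 < r -> ptolemy_interval d -> d 0 1 = r -> ptolemy_interval d' -> d' 0 1 = r ->
  isometric01 d d' -> curve_of d = curve_of d' \/ curve_of d = reflect_set (curve_of d').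
Proof.
move=> r0 pi dr pi' dr' [f [fI fS fiso]].
have [[h0 h1 hs ht] _ _] := pi; have [[h0' h1' hs' ht'] _ _] := pi'.
have cf := ctsS_within (iso_cts pi pi' fI fiso) (lexx 0) (lexx 1).
have finj : {in `[0, 1]%R &, injective f}.
  move=> x y /inI01 Ix /inI01 Iy e.
  apply: h1 => //; rewrite -fiso // e h0' //; exact: fI.
have I0 := I01_0 R; have I1 := I01_1 R.
case: (lerP (f 0) (f 1)) => f01.
- have mono := segment_continuous_inj_le f01 cf finj.
  have monoI : forall x y, I01 x -> I01 y -> (f x <= f y) = (x <= y).
    by move=> x y Ix Iy; apply: mono; apply/inI01.
  have fz : f 0 = 0.
    have [x0 Ix0 e] := fS 0 I0.
    have /I01P/andP[x00 _] := Ix0.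
    have := monoI 0 x0 I0 Ix0; rewrite x00 e => h.
    have /I01P/andP[h' _] := fI 0 I0.
    by apply/eqP; rewrite eq_le h h'.
  have fo : f 1 = 1.
    have [x1 Ix1 e] := fS 1 I1.
    have /I01P/andP[_ x11] := Ix1.
    have := monoI x1 1 Ix1 I1; rewrite x11 e => h.
    have /I01P/andP[_ h'] := fI 1 I1.
    by apply/eqP; rewrite eq_le h h'.
  left; apply/seteqP; split.
  + move=> z [t It <-]; exists (f t); first exact: fI.
    have e1 := fiso t 1 It I1; have e0 := fiso t 0 It I0; rewrite fo fz in e1 e0.
    by rewrite /= e1 e0.
  + move=> z [s Is <-]; have [x Ix <-] := fS s Is; exists x => //.
    have e1 := fiso x 1 Ix I1; have e0 := fiso x 0 Ix I0; rewrite fo fz in e1 e0.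
    by rewrite /= e1 e0.
- have mono := segment_continuous_inj_ge (ltW f01) cf finj.
  have monoI : forall x y, I01 x -> I01 y -> (f x <= f y) = (y <= x).
    by move=> x y Ix Iy; apply: mono; apply/inI01.
  have fz : f 0 = 1.
    have [x0 Ix0 e] := fS 1 I1.
    have /I01P/andP[x00 _] := Ix0.
    have := monoI x0 0 Ix0 I0; rewrite x00 e => h.
    have /I01P/andP[_ h'] := fI 0 I0.
    by apply/eqP; rewrite eq_le h h'.
  have fo : f 1 = 0.
    have [x1 Ix1 e] := fS 0 I0.
    have /I01P/andP[_ x11] := Ix1.
    have := monoI 1 x1 I1 Ix1; rewrite x11 e => h.
    have /I01P/andP[h' _] := fI 1 I1.
    by apply/eqP; rewrite eq_le h h'.
  right; apply/seteqP; split.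
  + move=> z [t It <-]; exists (d' (f t) 1, d' (f t) 0).
      by exists (f t) => //; exact: fI.
    have e1 := fiso t 1 It I1; have e0 := fiso t 0 It I0; rewrite fo fz in e1 e0.
    by rewrite /swap_pt /= e1 e0.
  + move=> z [w [s Is <-] <-]; have [x Ix <-] := fS s Is; exists x => //.
    have e1 := fiso x 1 Ix I1; have e0 := fiso x 0 Ix I0; rewrite fo fz in e1 e0.
    by rewrite /swap_pt /= e1 e0.
Qed.

Lemma swapK (R : realType) (u : R * R) : swap_pt (swap_pt u) = u.
Proof. by case: u. Qed.

Lemma part2 (R : realType) (r : R) (hr : 0 < r) :
  forall d d' : R -> R -> R,
     ptolemy_interval d -> d 0 1 = r -> ptolemy_interval d' -> d' 0 1 = r ->
     (isometric01 d d' <->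
        (curve_of d = curve_of d' \/ curve_of d = reflect_set (curve_of d'))).
Proof.
move=> d d' pi dr pi' dr'; split; first exact: (iso_fwd hr pi dr pi' dr').
case=> H.
- apply: (iso_back (sig := id) hr pi dr pi' dr') => //.
  + move=> x Ix.
    have : curve_of d' (pd d x) by rewrite -H; exists x.
    by move=> [y Iy e]; exists y.
  + move=> y Iy.
    have : curve_of d (pd d' y) by rewrite H; exists y.
    by move=> [x Ix e]; exists x.
- apply: (iso_back (sig := @swap_pt R) hr pi dr pi' dr').
  + move=> u w; have -> : cr (swap_pt u) (swap_pt w) = - cr u w.
      by rewrite /cr /swap_pt /=; ring.
    by rewrite normrN.
  + move=> x Ix.
    have : reflect_set (curve_of d') (pd d x) by rewrite -H; exists x.
    move=> [z [y Iy ez] e]; exists y; split => //.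
    by rewrite -e swapK -ez.
  + move=> y Iy.
    have : curve_of d (swap_pt (pd d' y)).
      by rewrite H; exists (pd d' y) => //; exists y.
    by move=> [x Ix e]; exists x; split => //; rewrite -[LHS]swapK -e.
Qed.


Theorem proposition3p7 (R : realType) (r : R) (hr : 0 < r) :
  (forall d : R -> R -> R, ptolemy_interval d -> d 0 1 = r ->
     convex_curve_set r (curve_of d))
  /\
  (forall d d' : R -> R -> R,
     ptolemy_interval d -> d 0 1 = r -> ptolemy_interval d' -> d' 0 1 = r ->
     (isometric01 d d' <->
        (curve_of d = curve_of d' \/ curve_of d = reflect_set (curve_of d'))))
  /\
  (forall A : set (R * R), convex_curve_set r A ->
     exists d : R -> R -> R,
       [/\ ptolemy_interval d, d 0 1 = r &
           (curve_of d = A \/ curve_of d = reflect_set A)]).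
Proof.
split; first exact: part1.
split; first exact: part2.
exact: part3.
Qed.
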